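(* Let $\Gamma$ be a graph whose switching class is a non-trivial regular two-graph. Then $\Gamma$ is not bipartite.
   Context: Graphs are finite, simple and undirected. For a graph $\Gamma$ with adjacency matrix $A$ on $v$ vertices, the Seidel matrix is $S(\Gamma)=J-I-2A$. For a partition $\Pi=\{U,W\}$ of the vertex set (one part possibly empty), Seidel switching gives the graph $\Gamma^\Pi$ on the same vertices in which two distinct vertices are adjacent iff either they are adjacent in $\Gamma$ and lie in the same part, or they are non-adjacent in $\Gamma$ and lie in different parts. The switching class $[\Gamma]$ is the set of all such $\Gamma^\Pi$. It is a regular two-graph if $S(\Gamma)$ has exactly two distinct eigenvalues; it is trivial if it contains a complete graph or an edgeless graph, and non-trivial otherwise. *)

(* Defs.v *)
From HB Require Import structures.
From mathcomp Require Import all_boot all_order all_algebra all_field.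
Set Implicit Arguments. Unset Strict Implicit. Unset Printing Implicit Defensive.
Import Order.TTheory GRing.Theory Num.Theory.
Local Open Scope ring_scope.

Definition simple_graph (v : nat) (e : rel 'I_v) : Prop :=
  (forall x y, e x y = e y x) /\ (forall x, ~~ e x x).

(* Seidel matrix S = J - I - 2A, over the algebraic complex numbers. *)
Definition seidel (v : nat) (e : rel 'I_v) : 'M[algC]_v :=
  \matrix_(i, j) (if i == j then 0 else if e i j then -1 else 1).

Definition switch (v : nat) (e : rel 'I_v) (U : {set 'I_v}) : rel 'I_v :=
  fun x y => (x != y) &&
    (if (x \in U) == (y \in U) then e x y else ~~ e x y).

Definition regular_two_graph (v : nat) (e : rel 'I_v) : Prop :=
  exists a b : algC, a != b /\
    forall c : algC, eigenvalue (seidel e) c <-> (c = a \/ c = b).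

Definition complete_graph (v : nat) (e : rel 'I_v) : Prop :=
  forall x y, x != y -> e x y.

Definition edgeless_graph (v : nat) (e : rel 'I_v) : Prop :=
  forall x y, ~~ e x y.

Definition trivial_switching_class (v : nat) (e : rel 'I_v) : Prop :=
  exists U : {set 'I_v},
    complete_graph (switch e U) \/ edgeless_graph (switch e U).

Definition bipartite (v : nat) (e : rel 'I_v) : Prop :=
  exists f : 'I_v -> bool, forall x y, e x y -> f x != f y.

(* Main.v *)
Require Import Defs.
From mathcomp Require Import all_boot all_order all_algebra all_field.
From mathcomp Require Import zify ring.
Import Order.TTheory GRing.Theory Num.Theory Num.Def.
Open Scope ring_scope.
Set Implicit Arguments. Unset Strict Implicit. Unset Printing Implicit Defensive.
Lemma diag_subC (n : nat) (d : 'rV[algC]_n) (a : algC) :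
  diag_mx d - a%:M = diag_mx (\row_k (d 0 k - a)).
Proof. by apply/matrixP => i j; rewrite !mxE mulrnBl. Qed.

Lemma seidel_herm (v : nat) (e : rel 'I_v) : simple_graph e ->
  map_mx conjC (trmx (seidel e)) = seidel e.
Proof.
move=> [esym _]; apply/matrixP => i j; rewrite !mxE eq_sym esym.
by case: (i == j); case: (e i j); rewrite ?rmorph0 ?rmorphN1 ?rmorph1.
Qed.

Lemma seidel_quad (v : nat) (e : rel 'I_v) (a b : algC) : simple_graph e ->
  (forall c : algC, eigenvalue (seidel e) c <-> (c = a \/ c = b)) ->
  (seidel e - a%:M) *m (seidel e - b%:M) = 0.
Proof.
move=> sg hab; set S := seidel e.
have Sn : S \is normalmx.
  by apply/normalmxP; rewrite seidel_herm.
move/orthomx_spectralP: Sn.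
set P := spectralmx S; set d := spectral_diag S => hS.
have Pu : P \in unitmx by apply: spectral_unit.
have PS : P *m S = diag_mx d *m P.
  by rewrite {1}hS !mulmxA mulmxV // mul1mx.
have ev : forall i, (d 0 i - a) * (d 0 i - b) = 0.
  move=> i; have : eigenvalue S (d 0 i).
    apply/eigenvalueP; exists (row i P).
      by rewrite -row_mul PS row_mul row_diag_mx -scalemxAl -rowE.
    apply/eqP => h0.
    have : row i (P *m invmx P) = 0 by rewrite row_mul h0 mul0mx.
    rewrite mulmxV // row1 => /matrixP /(_ 0 i); rewrite !mxE !eqxx /=.
    by move/eqP; rewrite oner_eq0.
  by case/hab => ->; rewrite subrr ?mulr0 ?mul0r.
have PB : forall c, P *m (S - c%:M) = (diag_mx d - c%:M) *m P.
  by move=> c; rewrite mulmxBr mulmxBl PS mul_mx_scalar mul_scalar_mx.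
have : P *m ((S - a%:M) *m (S - b%:M)) = 0.
  rewrite mulmxA PB -mulmxA PB mulmxA !diag_subC mulmx_diag.
  have -> : \row_j ((\row_k (d 0 k - a)) 0 j * (\row_k (d 0 k - b)) 0 j) = 0 :> 'rV_v.
    by apply/rowP => j; rewrite !mxE ev.
  by apply/matrixP => i j; rewrite !mxE big1 // => k _; rewrite !mxE; case: (_ == _); rewrite ?mulr0n ?mulr1n mul0r.
by move/(congr1 (mulmx (invmx P))); rewrite mulKmx // mulmx0.
Qed.
Lemma sum_ind (I : finType) (P : pred I) (x : I) (g : I -> int) :
  \sum_(k | P k) ((k == x)%:R * g k) = if P x then g x else 0.
Proof.
rewrite big_mkcond /= (bigD1 x) //= eqxx mul1r big1 ?addr0 //.
by move=> k /negbTE ->; rewrite mul0r if_same.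
Qed.

Lemma sum_ind1 (I : finType) (P : pred I) (x : I) :
  \sum_(k | P k) ((k == x)%:R : int) = if P x then 1 else 0.
Proof. by rewrite -(sum_ind P x (fun _ => 1)); apply: eq_bigr => k _; rewrite mulr1. Qed.

Lemma sum_bound (I : finType) (P : pred I) (t : I -> int) :
  (forall k, P k -> t k = 1 \/ t k = -1) ->
  `|\sum_(k | P k) t k| <= \sum_(k | P k) 1.
Proof.
move=> ht; apply: le_trans (ler_norm_sum _ _ _) _.
by apply: ler_sum => k /ht [] ->.
Qed.

Lemma sum_min (I : finType) (P : pred I) (t : I -> int) :
  (forall k, P k -> t k = 1 \/ t k = -1) ->
  \sum_(k | P k) t k = - \sum_(k | P k) 1 -> forall k, P k -> t k = -1.
Proof.
move=> ht hs k Pk.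
have h0 : \sum_(k | P k) (t k + 1) = 0 by rewrite big_split /= hs addNr.
have hnn : forall i, P i -> 0 <= t i + 1 by move=> i /ht [] ->.
by move/eqP: (psumr_eq0P hnn h0 Pk); rewrite addr_eq0 => /eqP.
Qed.

Lemma sum_max (I : finType) (P : pred I) (t : I -> int) :
  (forall k, P k -> t k = 1 \/ t k = -1) ->
  \sum_(k | P k) t k = \sum_(k | P k) 1 -> forall k, P k -> t k = 1.
Proof.
move=> ht hs k Pk.
have h0 : \sum_(k | P k) (1 - t k) = 0 by rewrite sumrB hs subrr.
have hnn : forall i, P i -> 0 <= 1 - t i by move=> i /ht [] ->.
by move/eqP: (psumr_eq0P hnn h0 Pk); rewrite subr_eq0 => /eqP <-.
Qed.

Lemma sum_pos_ex (I : finType) (P : pred I) :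
  0 < \sum_(k | P k) (1 : int) -> exists k, P k.
Proof.
move=> h; apply/existsP; apply: contraLR h => /existsPn hn.
by rewrite big_pred0 // => k; apply/negbTE.
Qed.


Definition Hyp v (f : 'I_v -> bool) (s : 'I_v -> 'I_v -> int) (p : int) :=
  [/\ forall i, s i i = 0, forall i j, s i j = s j i,
      forall i j, i != j -> s i j = 1 \/ s i j = -1,
      forall i j, i != j -> f i = f j -> s i j = 1
    & forall i j, i != j -> \sum_k s i k * s k j = p * s i j].

Definition M v (f : 'I_v -> bool) b : int := \sum_(k | f k == b) 1.
Definition R v (f : 'I_v -> bool) (s : 'I_v -> 'I_v -> int) i : int :=
  \sum_(k | f k != f i) s i k.
Definition D v (f : 'I_v -> bool) (s : 'I_v -> 'I_v -> int) x x' : int :=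
  \sum_(k | f k != f x) s x k * s k x'.

Lemma neq_of_f v (f : 'I_v -> bool) x y : f x != f y -> x != y.
Proof. by apply: contraNneq => ->. Qed.

Lemma Mtot v (f : 'I_v -> bool) : M f false + M f true = v%:Z.
Proof.
rewrite /M [RHS](_ : _ = \sum_(k < v) (1:int)); last by rewrite sumr_const card_ord natz.
rewrite [RHS](bigID (fun k => f k == false)) /=; congr (_ + _).
by apply: eq_bigl => k; case: (f k).
Qed.

Lemma M_ge0 v (f : 'I_v -> bool) b : 0 <= M f b.
Proof. by apply: sumr_ge0. Qed.

Lemma side1 v (f : 'I_v -> bool) b : 0 < M f b -> exists x, f x = b.
Proof. by case/sum_pos_ex => x /eqP; exists x. Qed.

Lemma side_count v (f : 'I_v -> bool) b x : f x = b ->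
  M f b = 1 + \sum_(k | (f k == b) && (k != x)) 1.
Proof. by move=> fx; rewrite /M (bigD1 x) //= fx. Qed.

Lemma side2 v (f : 'I_v -> bool) b : 1 < M f b ->
  exists x x', [/\ x != x', f x = b & f x' = b].
Proof.
move=> h; have [x fx] := side1 (lt_trans ltr01 h).
move: h; rewrite (side_count fx) => h.
have [x' /andP [/eqP fx' x'x]] : exists k, (f k == b) && (k != x).
  by apply: sum_pos_ex; move: h; rewrite -{1}[1]addr0 ltrD2l.
by exists x, x'; rewrite eq_sym.
Qed.


Lemma same v f s p (x x' : 'I_v) : Hyp f s p -> x != x' -> f x = f x' ->
  p = M f (f x) - 2 + D f s x x'.
Proof.
case=> s0 ssym spm sbip H xx' fxx'.
have := H x x' xx'; rewrite (sbip x x' xx' fxx') mulr1 => <-.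
rewrite (bigID (fun k => f k == f x)) /=; congr (_ + _).
rewrite (eq_bigr (fun k => 1 - (k == x)%:R - (k == x')%:R)).
  rewrite !sumrB !sum_ind1 eqxx fxx' eqxx /M; ring.
move=> k /eqP fk; case: (eqVneq k x) => [->|kx].
  by rewrite s0 (negbTE xx') /=; ring.
case: (eqVneq k x') => [ekx|kx'].
  by rewrite ekx in kx *; rewrite s0 /=; ring.
have e1 : s x k = 1 by apply: sbip; [rewrite eq_sym | rewrite fk].
have e2 : s k x' = 1 by apply: sbip; [ | rewrite fk].
by rewrite e1 e2 /=; ring.
Qed.

Lemma cross v f s p (x y : 'I_v) : Hyp f s p -> f x != f y ->
  R f s x + R f s y = (p + 2) * s x y.
Proof.
move=> hh fxy; have xy := neq_of_f fxy.
case: hh => s0 ssym spm sbip H.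
have fy : f y = ~~ f x by move: fxy; case: (f x); case: (f y).
have := H x y xy; rewrite (bigID (fun k => f k == f x)) /=.
rewrite (eq_bigr (fun k => s k y - (k == x)%:R * s k y)); last first.
  move=> k /eqP fk; case: (eqVneq k x) => [->|kx].
    by rewrite s0 mul0r /= mul1r subrr.
  by rewrite sbip 1?eq_sym // mul1r /= mul0r subr0.
rewrite [X in _ + X](eq_bigr (fun k => s x k - (k == y)%:R * s x k)); last first.
  move=> k fk; case: (eqVneq k y) => [->|ky].
    by rewrite s0 mulr0 /= mul1r subrr.
  by rewrite (sbip k y ky) ?fy; [rewrite mulr1 /= mul0r subr0 | move: fk; case: (f k); case: (f x)].
rewrite !sumrB !sum_ind eqxx eq_sym fxy ssym.
have -> : \sum_(k | f k == f x) s k y = R f s y.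
  rewrite /R; apply: eq_big => k; first by rewrite fy; case: (f k); case: (f x).
  by rewrite ssym.
move=> h; rewrite mulrDl -h /R; ring.
Qed.

Lemma spm_f v f s p (x y : 'I_v) : Hyp f s p -> f x != f y -> s x y = 1 \/ s x y = -1.
Proof. by case=> _ _ spm _ _ /neq_of_f; apply: spm. Qed.

Lemma cyc v f s p (x x' y y' : 'I_v) : Hyp f s p -> p + 2 != 0 ->
  f x = f x' -> f y = f y' -> f x != f y ->
  s x y * s x' y = s x y' * s x' y'.
Proof.
move=> hh q0 fx fy fxy.
have c1 := cross hh fxy.
have c2 : R f s x' + R f s y' = (p + 2) * s x' y' by apply: (cross hh); rewrite -fx -fy.
have c3 : R f s x + R f s y' = (p + 2) * s x y' by apply: (cross hh); rewrite -fy.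
have c4 : R f s x' + R f s y = (p + 2) * s x' y by apply: (cross hh); rewrite -fx.
have e : (p + 2) * (s x y + s x' y') = (p + 2) * (s x y' + s x' y).
  by rewrite !mulrDr -c1 -c2 -c3 -c4; ring.
move/(mulfI q0): e => e.
have h1 := spm_f hh fxy.
have h2 : s x' y = 1 \/ s x' y = -1 by apply: spm_f hh _; rewrite -fx.
have h3 : s x y' = 1 \/ s x y' = -1 by apply: spm_f hh _; rewrite -fy.
have h4 : s x' y' = 1 \/ s x' y' = -1 by apply: spm_f hh _; rewrite -fx -fy.
move: e; case: h1 => ->; case: h2 => ->; case: h3 => ->; case: h4 => ->; lia.
Qed.

Lemma Dconst v f s p (x x' y : 'I_v) : Hyp f s p -> p + 2 != 0 ->
  f x = f x' -> f y != f x -> D f s x x' = M f (~~ f x) * (s x y * s y x').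
Proof.
move=> hh q0 fx fyx; have hh' := hh; case: hh' => s0 ssym spm sbip H.
rewrite /D /M mulr_suml; apply: eq_big => k.
  by case: (f k); case: (f x).
move=> fk; rewrite mul1r (ssym k x') (ssym y x').
apply: cyc hh q0 fx _ _ => //; first by move: fk fyx; case: (f k); case: (f y); case: (f x).
by rewrite eq_sym.
Qed.

Lemma Dbound v f s p (x x' : 'I_v) : Hyp f s p -> f x = f x' ->
  `|D f s x x'| <= M f (~~ f x).
Proof.
move=> hh fx; have hh' := hh; case: hh' => s0 ssym spm sbip H.
rewrite /M (eq_bigl (fun k => f k != f x)); last by move=> k; case: (f k); case: (f x).
apply: sum_bound => k fk.
have : s x k = 1 \/ s x k = -1 by apply: spm_f hh _; rewrite eq_sym.
have : s k x' = 1 \/ s k x' = -1 by apply: spm_f hh _; rewrite -fx.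
by do 2! (case=> ->); [left|right|right|left]; lia.
Qed.

Lemma sum_const_mul (I : finType) (P : pred I) (c : int) :
  \sum_(k | P k) c = (\sum_(k | P k) 1) * c.
Proof. by rewrite mulr_suml; apply: eq_bigr => k _; rewrite mul1r. Qed.

Lemma caseA v (f : 'I_v -> bool) (s : 'I_v -> 'I_v -> int) (p : int) (b : bool) : Hyp f s p -> M f (~~ b) = 0 -> 1 < M f b ->
  p = M f b - 2 :> int.
Proof.
move=> hh h0 h2; have [x [x' [xx' fx fx']]] := side2 h2.
have e := same hh xx' (etrans fx (esym fx')).
have db := Dbound hh (etrans fx (esym fx')).
rewrite fx h0 in db; rewrite fx in e; lia.
Qed.

Lemma B1big v (f : 'I_v -> bool) (s : 'I_v -> 'I_v -> int) (p : int) (b : bool) : Hyp f s p -> p + 2 != 0 -> 1 < M f b -> 1 < M f (~~ b) ->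
  p = M f b + M f (~~ b) - 2.
Proof.
move=> hh q0 hb hnb.
have [x [x' [xx' fx fx']]] := side2 hb.
have [y [y' [yy' fy fy']]] := side2 hnb.
have fxx : f x = f x' by rewrite fx fx'.
have fyy : f y = f y' by rewrite fy fy'.
have fyx : f y != f x by rewrite fx fy; case: b {hb hnb fx fx' fy fy' fxx fyy}.
have fxy : f x != f y by rewrite eq_sym.
have e1 := same hh xx' fxx.
have e2 := same hh yy' fyy.
rewrite (Dconst hh q0 fxx fyx) fx in e1.
rewrite (Dconst hh q0 fyy fxy) in e2.
rewrite fy negbK in e2.
have h1 := spm_f hh fxy.
have h2 : s y x' = 1 \/ s y x' = -1 by apply: spm_f hh _; rewrite -fxx.
have h3 : s x y' = 1 \/ s x y' = -1 by apply: spm_f hh _; rewrite -fyy eq_sym.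
have h4 : s y x = 1 \/ s y x = -1 by apply: spm_f hh _.
move/eqP: q0 => q0.
move: e1 e2; case: h1 => ->; case: h2 => ->; case: h3 => ->; case: h4 => ->; lia.
Qed.

Lemma sq1 (a : int) : a = 1 \/ a = -1 -> a * a = 1.
Proof. by case=> ->. Qed.

Lemma bneq (c d : bool) : (c != d) = (c == ~~ d).
Proof. by case: c; case: d. Qed.

Lemma bnot (c : bool) : c != ~~ c.
Proof. by case: c. Qed.

Lemma bnot' (c : bool) : ~~ c != c.
Proof. by case: c. Qed.

Lemma B1one v (f : 'I_v -> bool) (s : 'I_v -> 'I_v -> int) (p : int) (b : bool) :
  Hyp f s p -> p + 2 != 0 -> 1 < M f b -> M f (~~ b) = 1 ->
  p = M f b - 1 \/ (M f b = 2 /\ p = -1).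
Proof.
move=> hh q0 hb hnb.
have [x [x' [xx' fx fx']]] := side2 hb.
have [y fy] : exists y, f y = ~~ b by apply: side1; rewrite hnb.
have fxy : f x != f y by rewrite fx fy bnot.
have hh' := hh; case: hh' => s0 ssym spm sbip H.
set a := s x y * s y x'.
have sxy := spm_f hh fxy.
have fyx : f y != f x by rewrite eq_sym.
have hk : forall k, f k = b -> k != x -> s y k = s x y * a.
  move=> k fk kx.
  have fxk : f x = f k by rewrite fx fk.
  have xk : x != k by rewrite eq_sym.
  have e := same hh xk fxk.
  rewrite (Dconst hh q0 fxk fyx) fx hnb mul1r in e.
  have e' := same hh xx' (etrans fx (esym fx')).
  rewrite (Dconst hh q0 (etrans fx (esym fx')) fyx) fx hnb mul1r in e'.
  have : s x y * s y k = a by rewrite /a; lia.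
  by move=> <-; rewrite mulrA sq1 // mul1r.
have e' := same hh xx' (etrans fx (esym fx')).
rewrite (Dconst hh q0 (etrans fx (esym fx')) fyx) fx hnb mul1r in e'.
have predx : forall k, (f k != f x) = (f k == ~~ b).
  by move=> k; rewrite fx bneq.
have predy : forall k, (f k != f y) = (f k == b).
  by move=> k; rewrite fy bneq negbK.
have Rx : R f s x = s x y.
  rewrite /R (bigD1 y) //=.
  have c0 : \sum_(k | (f k != f x) && (k != y)) (1:int) = 0.
    have := side_count fy; rewrite hnb => h.
    have -> : \sum_(k | (f k != f x) && (k != y)) (1:int) =
              \sum_(k | (f k == ~~ b) && (k != y)) 1.
      by apply: eq_bigl => k; rewrite predx.
    lia.
  have ht : forall k, (f k != f x) && (k != y) -> s x k = 1 \/ s x k = -1.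
    by move=> k /andP [fk _]; apply: spm_f hh _; rewrite eq_sym.
  have := @sum_bound _ (fun k => (f k != f x) && (k != y)) (s x) ht.
  rewrite c0 => hb0.
  suff -> : \sum_(k | (f k != f x) && (k != y)) s x k = 0 by rewrite addr0.
  by apply/eqP; rewrite -normr_le0.
have Ry : R f s y = s x y + (M f b - 1) * (s x y * a).
  rewrite /R (bigD1 x) //=.
  rewrite ssym; congr (_ + _).
  rewrite (eq_bigr (fun _ => s x y * a)); last first.
    by move=> k /andP [fk kx]; apply: hk => //; move: fk; rewrite predy => /eqP.
  rewrite sum_const_mul; congr (_ * _).
  rewrite (side_count fx) (addrC 1) addrK; apply: eq_bigl => k; by rewrite predy.
have cr := cross hh fxy.
rewrite Rx Ry in cr.
have sy : s y x' = 1 \/ s y x' = -1 by apply: spm_f hh _; rewrite fy fx' bnot'.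
move/eqP: q0 => q0.
move: cr e'; rewrite /a; case: sxy => ->; case: sy => ->; lia.
Qed.

Lemma B2le v (f : 'I_v -> bool) (s : 'I_v -> 'I_v -> int) (p : int) (b : bool) :
  Hyp f s p -> p + 2 = 0 -> 1 < M f b -> M f b <= M f (~~ b).
Proof.
move=> hh q0 hb; have [x [x' [xx' fx fx']]] := side2 hb.
have fxx : f x = f x' by rewrite fx fx'.
have e := same hh xx' fxx; have db := Dbound hh fxx.
rewrite fx in e db; lia.
Qed.

Lemma B2eq v (f : 'I_v -> bool) (s : 'I_v -> 'I_v -> int) (p : int) (b : bool) :
  Hyp f s p -> p + 2 = 0 -> 1 < M f b -> M f b = M f (~~ b) -> M f b = 2.
Proof.
move=> hh q0 hb hbb; have [x [x' [xx' fx fx']]] := side2 hb.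
have [y fy] : exists y, f y = ~~ b by apply: side1; lia.
have hh' := hh; case: hh' => s0 ssym spm sbip H.
have fxy : f x != f y by rewrite fx fy bnot.
have predx : forall k, (f k != f x) = (f k == ~~ b).
  by move=> k; rewrite fx bneq.
have predy : forall k, (f k != f y) = (f k == b).
  by move=> k; rewrite fy bneq negbK.
have neg : forall x'', f x'' = b -> x'' != x -> forall k, f k != b -> s x'' k = - s x k.
  move=> x'' fx'' x''x k fk.
  have fxx'' : f x = f x'' by rewrite fx fx''.
  have xx'' : x != x'' by rewrite eq_sym.
  have e := same hh xx'' fxx''; rewrite fx in e.
  have hs : \sum_(k | f k != f x) s x k * s k x'' = - \sum_(k | f k != f x) 1.
    have c : \sum_(k | f k != f x) (1:int) = M f (~~ b).
      by rewrite /M; apply: eq_bigl => j; rewrite predx.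
    rewrite c -hbb; rewrite /D in e; lia.
  have ht : forall j, f j != f x -> s x j * s j x'' = 1 \/ s x j * s j x'' = -1.
    move=> j fj.
    have : s x j = 1 \/ s x j = -1 by apply: spm_f hh _; rewrite eq_sym.
    have : s j x'' = 1 \/ s j x'' = -1 by apply: spm_f hh _; rewrite -fxx''.
    by case=> ->; case=> ->; [left|right|right|left]; lia.
  have fk' : f k != f x by rewrite fx.
  have := sum_min ht hs fk'.
  have : s x k = 1 \/ s x k = -1 by apply: spm_f hh _; rewrite eq_sym.
  by rewrite (ssym k x''); case=> ->; lia.
have fx'x : f x' != f y by rewrite fx' fy bnot.
have c1 := cross hh fxy; have c2 := cross hh fx'x.
have Rx' : R f s x' = - R f s x.
  rewrite /R -sumrN fx fx'; apply: eq_bigr => k fk.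
  by apply: neg => //; rewrite eq_sym.
have Ry : R f s y = s x y * (2 - M f b).
  rewrite /R (bigD1 x) //= (ssym y x).
  rewrite (eq_bigr (fun _ => - s x y)); last first.
    move=> k /andP [fk kx]; rewrite ssym; apply: neg => //.
      by move: fk; rewrite predy => /eqP.
    by rewrite fy bnot'.
  rewrite sum_const_mul.
  have -> : \sum_(i | (f i != f y) && (i != x)) (1:int) = M f b - 1.
    rewrite (side_count fx) (addrC 1) addrK; apply: eq_bigl => k; by rewrite predy.
  ring.
have sxy := spm_f hh fxy.
rewrite q0 mul0r in c1 c2.
move: c1 c2; rewrite Rx' Ry; case: sxy => ->; lia.
Qed.

Lemma core v (f : 'I_v -> bool) (s : 'I_v -> 'I_v -> int) (p : int) :
  Hyp f s p -> (3 <= v)%N -> p = v%:Z - 2 \/ p = 2 - v%:Z.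
Proof.
move=> hh v3.
have tot := Mtot f; have m0 := M_ge0 f false; have n0 := M_ge0 f true.
have v3' : 3 <= v%:Z by lia.
have [mz|mnz] := eqVneq (M f false) 0.
  left; have := @caseA _ f s p true hh mz; rewrite /=; lia.
have [nz|nnz] := eqVneq (M f true) 0.
  left; have := @caseA _ f s p false hh nz; rewrite /=; lia.
have [q0|q0] := eqVneq (p + 2) 0.
  have [m2|m1] := ltrP 1 (M f false).
    have l1 := @B2le _ f s p false hh q0 m2.
    have l2 := @B2le _ f s p true hh q0 ltac:(simpl in *; lia).
    have := @B2eq _ f s p false hh q0 m2 ltac:(simpl in *; lia).
    simpl in l1, l2; lia.
  have n2 : 1 < M f true by lia.
  have l1 := @B2le _ f s p true hh q0 n2.
  have l2 := @B2le _ f s p false hh q0 ltac:(simpl in *; lia).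
  have := @B2eq _ f s p true hh q0 n2 ltac:(simpl in *; lia).
  simpl in l1, l2; lia.
have [m2|m1] := ltrP 1 (M f false); have [n2|n1] := ltrP 1 (M f true).
- left; have := @B1big _ f s p false hh q0 m2 n2; rewrite /=; lia.
- have := @B1one _ f s p false hh q0 m2 ltac:(simpl; lia); rewrite /=; lia.
- have := @B1one _ f s p true hh q0 n2 ltac:(simpl; lia); rewrite /=; lia.
- lia.
Qed.

Lemma pair_sums v (f : 'I_v -> bool) (s : 'I_v -> 'I_v -> int) (p : int) (i j : 'I_v) :
  Hyp f s p -> i != j ->
  \sum_(k | (k != i) && (k != j)) (s i k * s k j * s j i) = p /\
  \sum_(k | (k != i) && (k != j)) (1 : int) = v%:Z - 2.
Proof.
move=> hh ij; case: hh => s0 ssym spm sbip H.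
have sij := spm i j ij.
split.
  have := H i j ij => /(congr1 (fun z => z * s j i)).
  rewrite mulr_suml -mulrA (ssym j i) (sq1 sij) mulr1 => <-.
  rewrite [RHS](bigD1 i) //= [X in _ = _ + X](bigD1 j) //=; last by rewrite eq_sym.
  by rewrite !s0 !mul0r !mulr0 !add0r mul0r add0r.
have : \sum_(k < v) (1:int) = v%:Z by rewrite sumr_const card_ord natz.
rewrite (bigD1 i) //= (bigD1 j) //=; last by rewrite eq_sym.
move=> h; rewrite -h; ring.
Qed.

Lemma pm_mul (a b : int) : a = 1 \/ a = -1 -> b = 1 \/ b = -1 -> a * b = 1 \/ a * b = -1.
Proof. by case=> ->; case=> ->; [left|right|right|left]. Qed.

Lemma triples v (f : 'I_v -> bool) (s : 'I_v -> 'I_v -> int) (p : int) :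
  Hyp f s p -> (3 <= v)%N -> exists c : int, (c = 1 \/ c = -1) /\
  forall i j k, i != j -> j != k -> i != k -> s i j * s j k * s k i = c.
Proof.
move=> hh v3; have hh' := hh; case: hh' => s0 ssym spm sbip H.
have key : forall i j k, i != j -> j != k -> i != k ->
    s i j * s j k * s k i = s i k * s k j * s j i.
  by move=> i j k _ _ _; rewrite (ssym i j) (ssym j k) (ssym k i); ring.
have ht : forall i j, i != j -> forall k, (k != i) && (k != j) ->
    s i k * s k j * s j i = 1 \/ s i k * s k j * s j i = -1.
  move=> i j ij l /andP [li lj].
  apply: pm_mul; last by apply: spm; rewrite eq_sym.
  by apply: pm_mul; apply: spm => //; rewrite eq_sym.
have [hp|hp] := core hh v3; [exists 1 | exists (-1)]; (split; [by auto|]);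
  move=> i j k ij jk ik; have [h1 h2] := pair_sums hh ij; rewrite key //.
- apply: (sum_max (ht i j ij)); first by rewrite h1 h2 hp.
  by rewrite eq_sym ik eq_sym jk.
- apply: (sum_min (ht i j ij)); first by rewrite h1 h2 hp opprB.
  by rewrite eq_sym ik eq_sym jk.
Qed.

Definition sZ v (e : rel 'I_v) (i j : 'I_v) : int :=
  if i == j then 0 else if e i j then -1 else 1.

Lemma sZ_ne v (e : rel 'I_v) i j : i != j -> sZ e i j = if e i j then -1 else 1.
Proof. by move=> ij; rewrite /sZ (negbTE ij). Qed.

Lemma sgn3 (a b d : bool) :
  (if a then -1 else 1) * (if b then -1 else 1) * (if d then -1 else 1) =
  (if a (+) b (+) d then -1 else 1) :> int.
Proof. by case: a; case: b; case: d; rewrite /= ?mulN1r ?mul1r ?opprK. Qed.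

Lemma sgn_inj (a b : bool) : (if a then -1 else 1) = (if b then -1 else 1) :> int -> a = b.
Proof. by case: a; case: b => // /eqP. Qed.

Lemma triv_of_triples v (e : rel 'I_v) (c : int) : simple_graph e -> c = 1 \/ c = -1 ->
  (forall i j k, i != j -> j != k -> i != k -> sZ e i j * sZ e j k * sZ e k i = c) ->
  trivial_switching_class e.
Proof.
case=> esym eirr hc.
case: v e esym eirr => [|v] e esym eirr ht.
  by exists set0; right => x; case: x.
pose w : 'I_v.+1 := ord0.
have [cb ec] : exists cb : bool, c = if cb then -1 else 1.
  by case: hc => ->; [exists false | exists true].
have key : forall x y, x != w -> y != w -> x != y -> e w x (+) e w y (+) e x y = cb.
  move=> x y xw yw xy.
  have wx : w != x by rewrite eq_sym.
  have wy : w != y by rewrite eq_sym.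
  have := ht w x y wx xy wy.
  rewrite (sZ_ne e wx) (sZ_ne e xy) (sZ_ne e yw) (esym y w) ec.
  rewrite sgn3 => /sgn_inj <-.
  by case: (e w x); case: (e x y); case: (e w y).
pose U := [set i | (i != w) && (e w i != cb)].
have claim : forall x y, x != y -> switch e U x y = cb.
  move=> x y xy; rewrite /switch xy /= !inE.
  case: (eqVneq x w) => [exw|xw] /=.
    rewrite exw in xy *; have yw : y != w by rewrite eq_sym.
    by rewrite yw /=; case: (e w y); destruct cb.
  case: (eqVneq y w) => [eyw|yw] /=.
    rewrite eyw in xy *.
    by rewrite (esym x w); case: (e w x); destruct cb.
  move: (key x y xw yw xy).
  by case: (e w x); case: (e w y); case: (e x y); destruct cb.
exists U; destruct cb.
  by left => x y xy; rewrite claim.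
right => x y; case: (eqVneq x y) => [->|xy]; first by rewrite /switch eqxx.
by rewrite claim.
Qed.

Theorem proposition7 (v : nat) (e : rel 'I_v) :
  simple_graph e ->
  regular_two_graph e ->
  ~ trivial_switching_class e ->
  ~ bipartite e.
Proof.
move=> sg [a [b [ab hab]]] ntriv [f hf]; apply: ntriv.
have [esym eirr] := sg.
case: (leqP 3 v) => v3; last first.
  apply: (@triv_of_triples v e 1) => //; first by left.
  move=> [i Hi] [j Hj] [k Hk]; rewrite -!val_eqE /=; lia.
have Q := seidel_quad sg hab.
have SZ : forall i j, seidel e i j = (sZ e i j)%:~R.
  move=> i j; rewrite mxE /sZ; case: (i == j); first by rewrite rmorph0.
  by case: (e i j); rewrite ?rmorphN1 ?rmorph1.
have off : forall i j, i != j ->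
    \sum_k seidel e i k * seidel e k j = (a + b) * seidel e i j.
  move=> i j ij; move/matrixP/(_ i j): Q.
  rewrite mulmxBl !mulmxBr mul_mx_scalar mul_scalar_mx -scalar_mxM.
  rewrite !mxE (negbTE ij) mulr0n => h.
  apply/eqP; rewrite -subr_eq0 -[X in _ == X]h; apply/eqP.
  ring.
have ZS : forall i j, i != j ->
    ((\sum_k sZ e i k * sZ e k j)%:~R : algC) = (a + b) * (sZ e i j)%:~R.
  move=> i j ij; rewrite -SZ -off // rmorph_sum; apply: eq_bigr => k _.
  by rewrite rmorphM !SZ.
have pm : forall i j, i != j -> sZ e i j = 1 \/ sZ e i j = -1.
  by move=> i j ij; rewrite sZ_ne //; case: (e i j); [right|left].
have h0 : (0 < v)%N by lia.
have h1 : (1 < v)%N by lia.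
pose i0 := Ordinal h0; pose j0 := Ordinal h1.
have ij0 : i0 != j0 by rewrite -val_eqE.
pose p := (\sum_k sZ e i0 k * sZ e k j0) * sZ e i0 j0.
have abp : a + b = p%:~R.
  by rewrite /p intrM ZS // -mulrA -intrM (sq1 (pm i0 j0 ij0)) mulr1z mulr1.
have Hy : Hyp f (sZ e) p.
  split.
  - by move=> i; rewrite /sZ eqxx.
  - by move=> i j; rewrite /sZ eq_sym esym.
  - exact: pm.
  - move=> i j ij fij; rewrite sZ_ne //; case: ifP => // /hf.
    by rewrite fij eqxx.
  - by move=> i j ij; apply: (@intr_inj algC); rewrite ZS // abp -intrM.
have [c [hc ht]] := triples Hy v3.
exact: triv_of_triples sg hc ht.
Qed.
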